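(* Let $\mathbf V$, $\mathbf V'$ be right vector spaces over (not necessarily commutative) fields $K$, $K'$, and let $\varphi:\mathcal P(\mathbf V)\dashrightarrow\mathcal P(\mathbf V')$ be a weak linear mapping such that $\operatorname{im}\varphi$ contains a triangle (three non-collinear points). Assume moreover that every field monomorphism $K\to K'$ is surjective. Then $\varphi$ is a linear mapping.
   Context: The projective space on a right vector space $\mathbf V$ over a skew field $K$ has point set $\mathcal P(\mathbf V)$ = set of one-dimensional subspaces, and lines = sets of points contained in a two-dimensional subspace. $\vee$ denotes join (span) of subspaces; for distinct points $X,Y$, $\{X\}\vee\{Y\}$ is the line through them, with conventions $\emptyset\vee\mathcal S=\mathcal S$ and $\{Z\}\vee\{Z\}=\{Z\}$. A partially defined mapping $\varphi:\mathcal P\dashrightarrow\mathcal P'$ has domain $\operatorname{dom}\varphi$, image set $\operatorname{im}\varphi$, exceptional set $\operatorname{ex}\varphi=\mathcal P\setminus\operatorname{dom}\varphi$; for $\mathcal M\subset\mathcal P$, $\mathcal M^\varphi:=\{X^\varphi:X\in\mathcal M\cap\operatorname{dom}\varphi\}$. $\varphi$ is weak linear if $(\{X\}\vee\{Y\})^\varphi\subset\{X\}^\varphi\vee\{Y\}^\varphi$ for all distinct points $X,Y$. $\varphi$ is linear if (L1) $(\{X\}\vee\{Y\})^\varphi=\{X\}^\varphi\vee\{Y\}^\varphi$ for all distinct points $X,Y$, and (L2) whenever $X^\varphi=Y^\varphi$ for distinct $X,Y\in\operatorname{dom}\varphi$, the line $\{X\}\vee\{Y\}$ contains a point of $\operatorname{ex}\varphi$.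 *)

(* Defs.v *)
From HB Require Import structures.
From mathcomp Require Import all_boot all_order all_algebra.
Set Implicit Arguments. Unset Strict Implicit. Unset Printing Implicit Defensive.
Import GRing.Theory.
Local Open Scope ring_scope.

Definition skew_field (K : unitRingType) : Prop :=
  forall x : K, x != 0 -> x \is a GRing.unit.

(* A right vector space over K is modelled as a left module over the
   converse ring K^c: the scaling  a *: v  (a : K^c) stands for  v a. *)

Section Proj.
Variables (R : pzRingType) (V : lmodType R).

Definition vspan (S : V -> Prop) : V -> Prop :=
  fun v => forall W : V -> Prop,
    W 0 -> (forall x y, W x -> W y -> W (x + y)) ->
    (forall (a : R) x, W x -> W (a *: x)) ->
    (forall x, S x -> W x) -> W v.

Definition is_point (X : V -> Prop) : Prop :=
  exists v : V, v != 0 /\ X = (fun w => exists a : R, w = a *: v).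

Definition point := {X : V -> Prop | is_point X}.

Definition pset := point -> Prop.

Definition pset1 (X : point) : pset := fun Y => Y = X.

(* join of two sets of points: all points contained in the span of
   (the vectors of) all points of M and N.  pjoin M N = M \/ N;
   it yields empty set / point / line in the cases used below. *)
Definition pjoin (M N : pset) : pset :=
  fun Z => forall v, proj1_sig Z v ->
    vspan (fun w => exists X : point, (M X \/ N X) /\ proj1_sig X w) v.

Definition psubset (M N : pset) : Prop := forall X, M X -> N X.
Definition pseteq (M N : pset) : Prop := forall X, M X <-> N X.
End Proj.

Arguments pset1 {R V}.

Section Maps.
Variables (R R' : pzRingType) (V : lmodType R) (V' : lmodType R').

(* partially defined mapping P(V) --> P(V'): None = exceptional *)
Definition projmap := point V -> option (point V').

Definition pimage (phi : projmap) (M : pset V) : pset V' :=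
  fun Z => exists X, M X /\ phi X = Some Z.

Definition im (phi : projmap) : pset V' := pimage phi (fun _ => True).

Definition weak_linear (phi : projmap) : Prop :=
  forall X Y : point V, X <> Y ->
    psubset (pimage phi (pjoin (pset1 X) (pset1 Y)))
            (pjoin (pimage phi (pset1 X)) (pimage phi (pset1 Y))).

Definition linear_map (phi : projmap) : Prop :=
  (forall X Y : point V, X <> Y ->
     pseteq (pimage phi (pjoin (pset1 X) (pset1 Y)))
            (pjoin (pimage phi (pset1 X)) (pimage phi (pset1 Y)))) /\
  (forall (X Y : point V) (Z' : point V'), X <> Y ->
     phi X = Some Z' -> phi Y = Some Z' ->
     exists Z, pjoin (pset1 X) (pset1 Y) Z /\ phi Z = None).
End Maps.

Definition contains_triangle (R : pzRingType) (V : lmodType R) (M : pset V) :=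
  exists A B C : point V, [/\ M A, M B, M C, A <> B &
    ~ pjoin (pset1 A) (pset1 B) C].

(* Main.v *)
From HB Require Import structures.
Require Import Defs.
From mathcomp Require Import all_boot all_order all_algebra.
From Stdlib Require Import Classical FunctionalExtensionality PropExtensionality ProofIrrelevance IndefiniteDescription.
Set Implicit Arguments. Unset Strict Implicit. Unset Printing Implicit Defensive.
Import GRing.Theory.
Local Open Scope ring_scope.

Section LA.
Variable F : unitRingType.
Hypothesis HF : forall x : F, x != 0 -> x \is a GRing.unit.
Variable V : lmodType F.

Lemma mulVf' (a : F) : a != 0 -> a^-1 * a = 1.
Proof. by move=> h; rewrite mulVr // HF. Qed.
Lemma mulfV' (a : F) : a != 0 -> a * a^-1 = 1.
Proof. by move=> h; rewrite mulrV // HF. Qed.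
Lemma invf_neq0 (a : F) : a != 0 -> a^-1 != 0.
Proof. by move=> h; rewrite invr_eq0. Qed.

Lemma scaleKf (a : F) (v : V) : a != 0 -> a^-1 *: (a *: v) = v.
Proof. by move=> h; rewrite scalerA mulVf' // scale1r. Qed.
Lemma scaleKVf (a : F) (v : V) : a != 0 -> a *: (a^-1 *: v) = v.
Proof. by move=> h; rewrite scalerA mulfV' // scale1r. Qed.

Lemma scale_eq0 (a : F) (v : V) : a *: v = 0 -> a = 0 \/ v = 0.
Proof.
case: (eqVneq a 0) => [->|h] e; first by left.
by right; rewrite -(scaleKf v h) e scaler0.
Qed.

Lemma mul_eq0' (a b : F) : a * b = 0 -> a = 0 \/ b = 0.
Proof.
case: (eqVneq b 0) => [->|h] e; first by right.
by left; rewrite -(mulr1 a) -(mulfV' h) mulrA e mul0r.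
Qed.

Lemma mul_neq0' (a b : F) : a != 0 -> b != 0 -> a * b != 0.
Proof. by move=> ha hb; apply/eqP => /mul_eq0' [] /eqP; rewrite ?(negPf ha) ?(negPf hb). Qed.

Definition span1 (v w : V) := exists a : F, w = a *: v.
Definition span2 (x y w : V) := exists a b : F, w = a *: x + b *: y.
Definition ind2 (x y : V) := forall a b : F, a *: x + b *: y = 0 -> a = 0 /\ b = 0.
Definition ind3 (x y z : V) :=
  forall a b c : F, a *: x + b *: y + c *: z = 0 -> [/\ a = 0, b = 0 & c = 0].

Lemma span2_0 x y : span2 x y 0.
Proof. by exists 0, 0; rewrite !scale0r addr0. Qed.
Lemma span2_l x y : span2 x y x.
Proof. by exists 1, 0; rewrite scale1r scale0r addr0. Qed.
Lemma span2_r x y : span2 x y y.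
Proof. by exists 0, 1; rewrite scale1r scale0r add0r. Qed.
Lemma span2_add x y u v : span2 x y u -> span2 x y v -> span2 x y (u + v).
Proof.
move=> [a [b ->]] [c [d ->]]; exists (a + c), (b + d).
by rewrite !scalerDl addrACA.
Qed.
Lemma span2_scale x y u (k : F) : span2 x y u -> span2 x y (k *: u).
Proof.
move=> [a [b ->]]; exists (k * a), (k * b).
by rewrite scalerDr !scalerA.
Qed.
Lemma span2_opp x y u : span2 x y u -> span2 x y (- u).
Proof. by move=> h; rewrite -scaleN1r; apply: span2_scale. Qed.
Lemma span2_sub x y u v : span2 x y u -> span2 x y v -> span2 x y (u - v).
Proof. by move=> h1 h2; apply: span2_add => //; apply: span2_opp. Qed.
Lemma span2_comb x y u v (a b : F) :
  span2 x y u -> span2 x y v -> span2 x y (a *: u + b *: v).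
Proof. by move=> h1 h2; apply: span2_add; apply: span2_scale. Qed.
Lemma span2_trans a b u v w :
  span2 a b u -> span2 a b v -> span2 u v w -> span2 a b w.
Proof. by move=> hu hv [c [d ->]]; apply: span2_comb. Qed.
Lemma span2_sym x y w : span2 x y w -> span2 y x w.
Proof. by move=> [a [b ->]]; exists b, a; rewrite addrC. Qed.
Lemma span1_span2 x y w : span1 x w -> span2 x y w.
Proof. by move=> [a ->]; exists a, 0; rewrite scale0r addr0. Qed.

Lemma ind2_sym x y : ind2 x y -> ind2 y x.
Proof. by move=> h a b e; have [] := h b a; rewrite // addrC. Qed.
Lemma ind2_neq0l x y : ind2 x y -> x != 0.
Proof.
move=> h; apply/eqP => e; have [] := h 1 0; first by rewrite e scaler0 scale0r addr0.
by move=> /eqP; rewrite oner_eq0.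
Qed.
Lemma ind2_neq0r x y : ind2 x y -> y != 0.
Proof. by move=> /ind2_sym /ind2_neq0l. Qed.

Lemma ind2_coef x y (a b c d : F) :
  ind2 x y -> a *: x + b *: y = c *: x + d *: y -> a = c /\ b = d.
Proof.
move=> h e; have [] := h (a - c) (b - d).
  by rewrite !scalerBl addrACA e -addrACA !subrr addr0.
by move=> /eqP; rewrite subr_eq0 => /eqP -> /eqP; rewrite subr_eq0 => /eqP ->.
Qed.

Lemma ind3_coef x y z (a b c a' b' c' : F) :
  ind3 x y z -> a *: x + b *: y + c *: z = a' *: x + b' *: y + c' *: z ->
  [/\ a = a', b = b' & c = c'].
Proof.
move=> h e; have [] := h (a - a') (b - b') (c - c').
  by rewrite !scalerBl (addrACA (a*:x)) (addrACA (a*:x + b*:y)) -!opprD e subrr.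
by move=> /eqP; rewrite subr_eq0 => /eqP -> /eqP; rewrite subr_eq0 => /eqP ->
   /eqP; rewrite subr_eq0 => /eqP ->.
Qed.

Lemma ind3_ind2 x y z : ind3 x y z -> ind2 x y.
Proof.
move=> h a b e; have [] := h a b 0; first by rewrite scale0r addr0.
by [].
Qed.
Lemma ind3_perm12 x y z : ind3 x y z -> ind3 y x z.
Proof.
move=> h a b c e; have [] := h b a c; first by rewrite (addrC (b *: x)).
by [].
Qed.
Lemma ind3_perm23 x y z : ind3 x y z -> ind3 x z y.
Proof.
move=> h a b c e; have [] := h a c b; first by rewrite -addrA (addrC (c *: y)) addrA.
by [].
Qed.
Lemma ind3_notspan x y z : ind3 x y z -> ~ span2 x y z.
Proof.
move=> h [a [b e]]; have [] := h a b (-1).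
  by rewrite e scaleN1r subrr.
by move=> _ _ /eqP; rewrite oppr_eq0 oner_eq0.
Qed.

Lemma ind2_notspan x y : x != 0 -> ~ span1 x y -> ind2 x y.
Proof.
move=> hx hs a b e; case: (eqVneq b 0) => [eb|nb].
  move: e; rewrite eb scale0r addr0 => /scale_eq0 [] // ex.
  by move: hx; rewrite ex eqxx.
exfalso; apply: hs; exists (- (b^-1 * a)).
have ey : b *: y = - (a *: x) by apply/eqP; rewrite -addr_eq0 addrC e.
by rewrite -(scaleKf y nb) ey scalerN scalerA scaleNr.
Qed.

Lemma ind3_of x y z : ind2 x y -> ~ span2 x y z -> ind3 x y z.
Proof.
move=> h hs a b c e; case: (eqVneq c 0) => [ec|nc].
  by move: e; rewrite ec scale0r addr0 => /h [].
exfalso; apply: hs; exists (- (c^-1 * a)), (- (c^-1 * b)).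
have ez : c *: z = - (a *: x + b *: y) by apply/eqP; rewrite -addr_eq0 addrC e.
by rewrite -(scaleKf z nc) ez scalerN scalerDr !scalerA !scaleNr opprD.
Qed.

Lemma not_ind2 x y : x != 0 -> y != 0 -> ~ ind2 x y -> exists k, k != 0 /\ y = k *: x.
Proof.
move=> hx hy hn.
have : span1 x y.
  apply: Classical_Prop.NNPP => hs; exact: hn (ind2_notspan hx hs).
move=> [k ek]; exists k; split=> //.
by apply/eqP => k0; move: hy; rewrite ek k0 scale0r eqxx.
Qed.

Lemma exch_aux x y a b : ind2 a b -> span2 x y a -> span2 x y b ->
  span2 a b x /\ span2 a b y.
Proof.
move=> hab [a1 [b1 ea]] [a2 [b2 eb]].
have ha := ind2_neq0l hab; have hb := ind2_neq0r hab.
case: (eqVneq a1 0) => [a10|na1].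
  move: ea; rewrite a10 scale0r add0r => ea.
  have nb1 : b1 != 0 by apply/eqP => e; move: ha; rewrite ea e scale0r eqxx.
  have hy : span2 a b y by exists b1^-1, 0; rewrite scale0r addr0 ea scaleKf.
  have na2 : a2 != 0.
    apply/eqP => e; have [] := hab (b2 * b1^-1) (-1).
      by rewrite eb e scale0r add0r ea scalerA -mulrA mulVf' // mulr1 scaleN1r subrr.
    by move=> _ /eqP; rewrite oppr_eq0 oner_eq0.
  split=> //.
  have -> : x = a2^-1 *: b - (a2^-1 * b2) *: y.
    by rewrite eb scalerDr scaleKf // scalerA addrK.
  by apply: span2_sub; [apply: span2_scale; apply: span2_r| apply: span2_scale].
have hx : span2 a y x.
  exists a1^-1, (- (a1^-1 * b1)).
  by rewrite ea scalerDr scaleKf // scalerA scaleNr addrK.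
have hby : span2 a y b.
  apply: (span2_trans (u := x) (v := y)) => //; [exact: span2_r | by exists a2, b2].
have [c [d ebd]] := hby.
have nd : d != 0.
  apply/eqP => e; have [] := hab c (-1).
    by rewrite ebd e scale0r addr0 scaleN1r subrr.
  by move=> _ /eqP; rewrite oppr_eq0 oner_eq0.
have hy : span2 a b y.
  exists (- (d^-1 * c)), d^-1.
  by rewrite ebd scalerDr scaleKf // scalerA scaleNr addKr.
split=> //.
apply: (span2_trans (u := a) (v := y)) => //; exact: span2_l.
Qed.

Lemma exch x y a b w : ind2 a b -> span2 x y a -> span2 x y b -> span2 x y w ->
  span2 a b w.
Proof.
move=> hab ha hb hw; have [h1 h2] := exch_aux hab ha hb.
exact: span2_trans h1 h2 hw.
Qed.

Lemma three_in_two x y a b c : ind3 a b c ->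
  ~ span2 x y a \/ ~ span2 x y b \/ ~ span2 x y c.
Proof.
move=> h; apply: Classical_Prop.NNPP => hn.
apply: (ind3_notspan h); apply: (exch (x := x) (y := y)).
- exact: ind3_ind2 h.
- by apply: Classical_Prop.NNPP => H; apply: hn; left.
- by apply: Classical_Prop.NNPP => H; apply: hn; right; left.
- by apply: Classical_Prop.NNPP => H; apply: hn; right; right.
Qed.

End LA.

Section PT.
Variable F : unitRingType.
Hypothesis HF : forall x : F, x != 0 -> x \is a GRing.unit.
Variable V : lmodType F.

Definition pmem (X : point V) (v : V) := proj1_sig X v.

Definition pt (v : V) (h : v != 0) : point V :=
  exist _ (fun w => exists a : F, w = a *: v) (ex_intro _ v (conj h erefl)).

Lemma pt_mem v h : pmem (@pt v h) v.
Proof. by exists 1; rewrite scale1r. Qed.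

Lemma point_gen (X : point V) : exists v, v != 0 /\ pmem X v.
Proof.
case: X => P hP; have [v [hv eP]] := hP; rewrite /pmem /=.
by exists v; split=> //; rewrite eP; exists 1; rewrite scale1r.
Qed.

Lemma point_char (X : point V) v : pmem X v -> v != 0 ->
  forall w, pmem X w <-> span1 v w.
Proof.
case: X => P hP; have [v0 [hv0 eP]] := hP; rewrite /pmem /= eP => -[c ec] hv w; split.
- move=> [a ->]; have nc : c != 0.
    by apply/eqP => e; move: hv; rewrite ec e scale0r eqxx.
  by exists (a * c^-1); rewrite ec scalerA -mulrA mulVf'// mulr1.
- by move=> [a ->]; exists (a * c); rewrite ec scalerA.
Qed.

Lemma point_eq (X Y : point V) v : pmem X v -> pmem Y v -> v != 0 -> X = Y.
Proof.
move=> hX hY hv.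
have e : proj1_sig X = proj1_sig Y.
  apply: functional_extensionality => w; apply: propositional_extensionality.
  by rewrite -/(pmem X w) -/(pmem Y w) (point_char hX hv) (point_char hY hv).
move: X Y e {hX hY} => [P hP] [Q hQ] /= e; subst Q; f_equal; apply: proof_irrelevance.
Qed.

Lemma pmem_scale (X : point V) v (a : F) : pmem X v -> pmem X (a *: v).
Proof.
case: X => P hP; have [v0 [hv0 eP]] := hP; rewrite /pmem /= eP => -[c ->].
by exists (a * c); rewrite scalerA.
Qed.

Lemma vspan_sub (S : V -> Prop) a b v :
  (forall w, S w -> span2 a b w) -> vspan S v -> span2 a b v.
Proof.
move=> hS hv; apply: hv => //.
- exact: span2_0.
- by move=> x y; apply: span2_add.
- by move=> k x; apply: span2_scale.
Qed.

Lemma vspan_span2 (S : V -> Prop) x y w : S x -> S y -> span2 x y w -> vspan S w.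
Proof.
move=> hx hy [a [b ->]] W h0 hadd hsc hsub.
by apply: hadd; apply: hsc; apply: hsub.
Qed.

Lemma ind2_pt_neq (X Y : point V) x y : pmem X x -> pmem Y y -> ind2 x y -> X <> Y.
Proof.
move=> hx hy hi e; subst Y.
have [k ek] := proj1 (point_char hx (ind2_neq0l hi) y) hy.
have [] := hi k (-1); first by rewrite -ek scaleN1r subrr.
by move=> _ /eqP; rewrite oppr_eq0 oner_eq0.
Qed.

Lemma pt_neq_ind2 (X Y : point V) x y : pmem X x -> pmem Y y -> x != 0 -> y != 0 ->
  X <> Y -> ind2 x y.
Proof.
move=> hx hy nx ny hne; apply: NNPP => hn.
have [k [nk ek]] := not_ind2 HF nx ny hn.
apply: hne; apply: (point_eq hx _ nx).
have -> : x = k^-1 *: y by rewrite ek scaleKf.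
exact: pmem_scale.
Qed.

Lemma pjoin_span (X Y Z : point V) x y z : pmem X x -> pmem Y y -> pmem Z z -> z != 0 ->
  span2 x y z -> pjoin (pset1 X) (pset1 Y) Z.
Proof.
move=> hx hy hz nz hs v hv.
have [k ->] := proj1 (point_char hz nz v) hv.
apply: (vspan_span2 (x := x) (y := y)).
- by exists X; split; [left|].
- by exists Y; split; [right|].
- exact: span2_scale.
Qed.

Lemma pjoin_span_inv (X Y Z : point V) x y z : pmem X x -> pmem Y y -> pmem Z z ->
  x != 0 -> y != 0 -> pjoin (pset1 X) (pset1 Y) Z -> span2 x y z.
Proof.
move=> hx hy hz nx ny hj; apply: (vspan_sub _ (hj z hz)) => w [W [[->|->] hw]].
- by have [k ->] := proj1 (point_char hx nx w) hw; apply: span2_scale; apply: span2_l.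
- by have [k ->] := proj1 (point_char hy ny w) hw; apply: span2_scale; apply: span2_r.
Qed.

End PT.

Section MP.
Variables F F' : unitRingType.
Hypothesis HF : forall x : F, x != 0 -> x \is a GRing.unit.
Hypothesis HF' : forall x : F', x != 0 -> x \is a GRing.unit.
Variables (V : lmodType F) (V' : lmodType F').
Variable phi : projmap V V'.
Hypothesis WL : weak_linear phi.

Definition M (v : V) (v' : V') := [/\ v != 0, v' != 0 &
  exists X Y, [/\ pmem X v, phi X = Some Y & pmem Y v']].
Definition U (v : V) := v != 0 /\ exists X, pmem X v /\ phi X = None.

Lemma M_cases v : v != 0 -> (exists v', M v v') \/ U v.
Proof.
move=> hv; case e: (phi (pt hv)) => [Y|].
- left; have [y [hy my]] := point_gen Y; exists y; split=> //.
  by exists (pt hv), Y; split=> //; apply: pt_mem.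
- by right; split=> //; exists (pt hv); split=> //; apply: pt_mem.
Qed.

Lemma M_pt v v' X : M v v' -> pmem X v -> exists Y, phi X = Some Y /\ pmem Y v'.
Proof.
move=> [hv hv' [X1 [Y [h1 e h2]]]] hX.
by rewrite (point_eq HF hX h1 hv); exists Y.
Qed.

Lemma U_pt v X : U v -> pmem X v -> phi X = None.
Proof. by move=> [hv [X1 [h1 e]]] hX; rewrite (point_eq HF hX h1 hv). Qed.

Lemma MU_false v v' : M v v' -> U v -> False.
Proof.
move=> hM [hv [X [hX e]]]; have [Y [e' _]] := M_pt hM hX.
by rewrite e in e'.
Qed.

Lemma M_uniq v a b : M v a -> M v b -> exists k, k != 0 /\ b = k *: a.
Proof.
move=> ha [hv hb [X [Y [hX e hY]]]].
have [Y1 [e1 hY1]] := M_pt ha hX; move: e; rewrite e1 => -[eY]; subst Y1.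
have [k ek] := proj1 (point_char HF' hY1 (let: And3 _ h _ := ha in h) b) hY.
exists k; split=> //; apply/eqP => k0; move: hb; rewrite ek k0 scale0r eqxx.
by [].
Qed.

Lemma M_scale v v' (a : F) (b : F') : M v v' -> a != 0 -> b != 0 -> M (a *: v) (b *: v').
Proof.
move=> [hv hv' [X [Y [hX e hY]]]] ha hb; split.
- by apply/eqP => /(scale_eq0 HF) [] /eqP; rewrite ?(negPf ha) ?(negPf hv).
- by apply/eqP => /(scale_eq0 HF') [] /eqP; rewrite ?(negPf hb) ?(negPf hv').
- by exists X, Y; split=> //; apply: pmem_scale.
Qed.

Lemma M_scale1 v v' (b : F') : M v v' -> b != 0 -> M v (b *: v').
Proof. by move=> h hb; rewrite -(scale1r v); apply: M_scale => //; rewrite oner_eq0. Qed.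

Lemma M_proj v a w' (c : F) : M v a -> M (c *: v) w' -> exists k, k != 0 /\ w' = k *: a.
Proof.
move=> h1 h2; have nc : c != 0.
  by case: h2 => h _ _; apply/eqP => e; move: h; rewrite e scale0r eqxx.
have h3 : M (c *: v) a by have := M_scale h1 nc (oner_neq0 F'); rewrite scale1r.
exact: M_uniq h3 h2.
Qed.

Lemma WL_MM x y w x' y' w' : ind2 x y -> M x x' -> M y y' -> span2 x y w -> M w w' ->
  span2 x' y' w'.
Proof.
move=> hi hx hy hs hw.
have [_ _ [X [X' [mX eX mX']]]] := hx.
have [_ _ [Y [Y' [mY eY mY']]]] := hy.
have [nw nw' [W [W' [mW eW mW']]]] := hw.
have hXY := ind2_pt_neq HF mX mY hi.
have hj := @WL X Y hXY W' (ex_intro _ W (conj (pjoin_span HF mX mY mW nw hs) eW)).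
apply: (vspan_sub _ (hj w' mW')) => u [Z [[[X1 [-> e]]|[X1 [-> e]]] hu]].
- move: e; rewrite eX => -[eZ]; subst Z.
  have [k ->] := proj1 (point_char HF' mX' (let: And3 _ h _ := hx in h) u) hu.
  by apply: span2_scale; apply: span2_l.
- move: e; rewrite eY => -[eZ]; subst Z.
  have [k ->] := proj1 (point_char HF' mY' (let: And3 _ h _ := hy in h) u) hu.
  by apply: span2_scale; apply: span2_r.
Qed.

Lemma WL_MU x y w x' w' : ind2 x y -> M x x' -> U y -> span2 x y w -> M w w' ->
  span1 x' w'.
Proof.
move=> hi hx hy hs hw.
have [_ _ [X [X' [mX eX mX']]]] := hx.
have [_ [Y [mY eY]]] := hy.
have [nw nw' [W [W' [mW eW mW']]]] := hw.
have hXY := ind2_pt_neq HF mX mY hi.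
have hj := @WL X Y hXY W' (ex_intro _ W (conj (pjoin_span HF mX mY mW nw hs) eW)).
have : span2 x' x' w'.
  apply: (vspan_sub _ (hj w' mW')) => u [Z [[[X1 [-> e]]|[X1 [-> e]]] hu]].
  - move: e; rewrite eX => -[eZ]; subst Z.
    have [k ->] := proj1 (point_char HF' mX' (let: And3 _ h _ := hx in h) u) hu.
    by apply: span2_scale; apply: span2_l.
  - by move: e; rewrite eY.
by move=> [a [b ->]]; exists (a + b); rewrite scalerDl.
Qed.

End MP.

Section LA2.
Variable F : unitRingType.
Hypothesis HF : forall x : F, x != 0 -> x \is a GRing.unit.
Variable V : lmodType F.

Lemma ind2_prop (a b : V) (k : F) : ind2 a b -> b = k *: a -> False.
Proof.
move=> h e; have [] := h k (-1); first by rewrite -e scaleN1r subrr.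
by move=> _ /eqP; rewrite oppr_eq0 oner_eq0.
Qed.

Lemma span1_ind2 (e a b : V) : span1 e a -> span1 e b -> a != 0 -> ind2 a b -> False.
Proof.
move=> [k ->] [l ->] ha hi.
have nk : k != 0 by apply/eqP => k0; move: ha; rewrite k0 scale0r eqxx.
apply: (ind2_prop (k := l * k^-1) hi). rewrite scalerA -mulrA (mulVf' HF) // mulr1. done.
Qed.

Lemma ind3_neq0 (x y z : V) (a b : F) : ind3 x y z -> x + a *: y + b *: z != 0.
Proof.
move=> h; apply/eqP => e; have [] := h 1 a b; first by rewrite scale1r.
by move=> /eqP; rewrite oner_eq0.
Qed.

Lemma ind3_I1 (x y z : V) (s : F) : ind3 x y z -> ind2 (x + s *: y) z.
Proof.
move=> h c1 c2 e; have [] := h c1 (c1 * s) c2; last by [].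
by rewrite -scalerA -scalerDr.
Qed.

Lemma ind3_I2 (x y z : V) (s : F) : ind3 x y z -> ind2 x (y + s *: z).
Proof.
move=> h c1 c2 e; have [] := h c1 c2 (c2 * s); last by [].
by rewrite -scalerA -addrA -scalerDr.
Qed.

Lemma ind3_I3 (x y z : V) (s t : F) : ind3 x y z -> ind2 (x + s *: y) (y + t *: z).
Proof.
move=> h c1 c2 e.
have e' : c1 *: x + (c1 * s + c2) *: y + (c2 * t) *: z = 0.
  by rewrite -e scalerDl !scalerDr !scalerA !addrA.
have [c10 hc2 _] := h _ _ _ e'.
by move: hc2; rewrite c10 mul0r add0r.
Qed.

Lemma ind3_span_ind2 (x y c e : V) : ind3 x y c -> span2 x y e -> e != 0 -> ind2 c e.
Proof.
move=> h [m [n ee]] ne a b eq.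
have e' : (b * m) *: x + (b * n) *: y + a *: c = 0.
  by rewrite -!scalerA -scalerDr -ee addrC.
have [h1 h2 h3] := h _ _ _ e'.
split=> //; apply: NNPP => nb.
have m0 : m = 0 by case: (mul_eq0' HF h1) => // /eqP; rewrite (negPf (negP nb)) .
have n0 : n = 0 by case: (mul_eq0' HF h2) => // /eqP; rewrite (negPf (negP nb)).
by move: ne; rewrite ee m0 n0 !scale0r addr0 eqxx.
Qed.

Lemma ind3_perm_cyc (x y z : V) : ind3 x y z -> ind3 y z x.
Proof. by move=> h; apply: ind3_perm23; apply: ind3_perm12. Qed.

End LA2.

Section CORE.
Variables F F' : unitRingType.
Hypothesis HF : forall x : F, x != 0 -> x \is a GRing.unit.
Hypothesis HF' : forall x : F', x != 0 -> x \is a GRing.unit.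
Variables (V : lmodType F) (V' : lmodType F').
Variable phi : projmap V V'.
Hypothesis WL : weak_linear phi.

Notation M := (M phi).
Notation U := (U phi).

Lemma Mnz v v' : M v v' -> v != 0. Proof. by case. Qed.
Lemma Mnz' v v' : M v v' -> v' != 0. Proof. by case. Qed.

Lemma ind2_img x y x' y' : M x x' -> M y y' -> ind2 x' y' -> ind2 x y.
Proof.
move=> hx hy hi; apply: NNPP => hn.
have [k [nk ek]] := not_ind2 HF (Mnz hx) (Mnz hy) hn.
move: hy; rewrite ek => hy.
have [l [_ el]] := M_proj HF HF' hx hy.
exact: ind2_prop hi el.
Qed.

Lemma LINE x y w x' y' w' : M x x' -> M y y' -> ind2 x' y' -> span2 x y w -> M w w' ->
  span2 x' y' w'.
Proof.
move=> hx hy hi; apply: (WL_MM HF HF' WL) => //; exact: ind2_img hi.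
Qed.

Lemma FA x y x' y' w : M x x' -> M y y' -> ind2 x' y' -> span2 x y w -> w != 0 ->
  exists w', M w w'.
Proof.
move=> hx hy hi hs nw; case: (M_cases phi nw) => // hU; exfalso.
have hxy := ind2_img hx hy hi.
move: hs => [a [b ew]].
case: (eqVneq b 0) => [b0|nb].
  move: ew; rewrite b0 scale0r addr0 => ew.
  have na : a != 0 by apply/eqP => a0; move: nw; rewrite ew a0 scale0r eqxx.
  apply: (MU_false HF (v' := 1 *: x') _ hU); rewrite ew.
  by apply: (M_scale HF HF') => //; rewrite oner_eq0.
have hxw : ind2 x w.
  move=> c d e.
  have e' : (c + d * a) *: x + (d * b) *: y = 0.
    by rewrite -e ew scalerDr !scalerA scalerDl addrA.
  have [h1 h2] := hxy _ _ e'.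
  have d0 : d = 0 by case: (mul_eq0' HF h2) => // /eqP; rewrite (negPf nb).
  by move: h1; rewrite d0 mul0r addr0.
have hsy : span2 x w y.
  exists (- (b^-1 * a)), b^-1.
  by rewrite ew scalerDr !scalerA (mulVf' HF) // scale1r scaleNr addKr.
have := WL_MU HF HF' WL hxw hx hU hsy hy.
move=> [k ek]; exact: ind2_prop hi ek.
Qed.

Lemma notspan_img x y z x' y' z' : M x x' -> M y y' -> M z z' -> ind3 x' y' z' ->
  ind3 x y z.
Proof.
move=> hx hy hz hi; have h2 := ind3_ind2 hi.
apply: (ind3_of HF) => //; first exact: ind2_img h2.
move=> hs; apply: (ind3_notspan hi); exact: LINE hx hy h2 hs hz.
Qed.

Lemma INJ x y c x0 y0 c0 p q e0 : M x x0 -> M y y0 -> M c c0 -> ind3 x0 y0 c0 ->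
  span2 x y p -> span2 x y q -> M p e0 -> M q e0 -> exists k, q = k *: p.
Proof.
move=> hx hy hc hi sp sq hp hq.
have np := Mnz hp; have nq := Mnz hq.
apply: NNPP => hn.
have hpq : ind2 p q.
  apply: NNPP => hn2; apply: hn; have [k [_ ek]] := not_ind2 HF np nq hn2; by exists k.
have h2 := ind3_ind2 hi.
have hxyc := notspan_img hx hy hc hi.
have se0 : span2 x0 y0 e0 := LINE hx hy h2 sp hp.
have hce : ind2 c0 e0 := ind3_span_ind2 HF' hi se0 (Mnz' hp).
have hpqc : ind3 p q c.
  apply: (ind3_of HF) => // hs; apply: (ind3_notspan hxyc).
  exact: span2_trans sp sq hs.
have key : forall (al be : F) t0, be != 0 -> M (al *: p + be *: q) t0 -> span1 e0 t0.
  move=> al be t0 nbe ht.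
  set r := c + p; set s := be *: q - al *: c.
  have hcp : ind2 c p := ind2_img hc hp hce.
  have hcq : ind2 c q := ind2_img hc hq hce.
  have spr : span2 c p r by exists 1, 1; rewrite !scale1r.
  have nr : r != 0.
    apply/eqP => e; have [h _] := hcp 1 1 ltac:(by rewrite !scale1r; exact: e).
    by move/eqP: h; rewrite oner_eq0.
  have sps : span2 c q s by exists (- al), be; rewrite addrC scaleNr.
  have ns : s != 0.
    apply/eqP => e; have [_ h] := hcq (- al) be ltac:(by rewrite addrC scaleNr; exact: e).
    by move/eqP: h; rewrite (negPf nbe).
  have [r0 hr] := FA hc hp hce spr nr.
  have [s0 hs] := FA hc hq hce sps ns.
  have sr0 := LINE hc hp hce spr hr.
  have ss0 := LINE hc hq hce sps hs.
  have hrs : ind2 r s.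
    move=> a b e.
    have e' : a *: p + (b * be) *: q + (a - b * al) *: c = 0.
      rewrite -e /r /s scalerDr scalerBr !scalerA scalerBl.
      by rewrite addrC -!addrA; congr (_ + _); rewrite addrC -!addrA; congr (_ + _); rewrite addrC addrA subrK.
    have [h1 h3 h4] := hpqc _ _ _ e'.
    have b0 : b = 0 by case: (mul_eq0' HF h3) => // /eqP; rewrite (negPf nbe).
    by [].
  have st : span2 r s (al *: p + be *: q).
    exists al, 1; rewrite scale1r /r /s scalerDr; symmetry.
    by rewrite addrC addrA subrK addrC.
  have st0 := WL_MM HF HF' WL hrs hr hs st ht.
  have st1 : span2 c0 e0 t0 := span2_trans sr0 ss0 st0.
  have st2 : span2 x0 y0 t0.
    apply: LINE hx hy h2 _ ht.
    by apply: span2_comb.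
  move: st1 => [u [v et]].
  case: (eqVneq u 0) => [u0|nu].
    by exists v; rewrite et u0 scale0r add0r.
  exfalso; apply: (ind3_notspan hi).
  have -> : c0 = u^-1 *: t0 - (u^-1 * v) *: e0.
    by rewrite et scalerDr (scaleKf HF') // scalerA addrK.
  by apply: span2_sub; apply: span2_scale.
have hx' : span1 e0 x0.
  have [[al [be ex]] _] := exch_aux HF hpq sp sq.
  case: (eqVneq be 0) => [be0|nbe]; last by apply: (key al be x0 nbe); rewrite -ex.
  move: ex; rewrite be0 scale0r addr0 => ex.
  have hx2 : M (al *: p) x0 by rewrite -ex.
  have [k [_ ek]] := M_proj HF HF' hp hx2.
  by exists k.
have hy' : span1 e0 y0.
  have [_ [al [be ey]]] := exch_aux HF hpq sp sq.
  case: (eqVneq be 0) => [be0|nbe]; last by apply: (key al be y0 nbe); rewrite -ey.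
  move: ey; rewrite be0 scale0r addr0 => ey.
  have hy2 : M (al *: p) y0 by rewrite -ey.
  have [k [_ ek]] := M_proj HF HF' hp hy2.
  by exists k.
apply: (span1_ind2 HF' hx' hy') => //. by case: hx.
Qed.

End CORE.

Section SIG.
Variables F F' : unitRingType.
Hypothesis HF : forall x : F, x != 0 -> x \is a GRing.unit.
Hypothesis HF' : forall x : F', x != 0 -> x \is a GRing.unit.
Variables (V : lmodType F) (V' : lmodType F').
Variable phi : projmap V V'.
Hypothesis WL : weak_linear phi.

Notation M := (M phi).
Notation U := (U phi).

Lemma fchoice (A B : Type) (R : A -> B -> Prop) :
  (forall a, exists b, R a b) -> exists f, forall a, R a (f a).
Proof. exact: functional_choice. Qed.

Lemma COEF p q c p0 q0 c0 : M p p0 -> M q q0 -> M c c0 -> ind3 p0 q0 c0 ->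
  forall a, exists b, M (p + a *: q) (p0 + b *: q0).
Proof.
move=> hp hq hc hi a.
have h2 := ind3_ind2 hi.
have hpq := ind2_img HF HF' hp hq h2.
have sw : span2 p q (p + a *: q) by exists 1, a; rewrite scale1r.
have nw : p + a *: q != 0.
  apply/eqP => e; have [h _] := hpq 1 a ltac:(by rewrite scale1r).
  by move/eqP: h; rewrite oner_eq0.
have [w0 hw] := FA HF HF' WL hp hq h2 sw nw.
have [u [v ew]] := LINE HF HF' WL hp hq h2 sw hw.
case: (eqVneq u 0) => [u0|nu].
  exfalso.
  have nv : v != 0.
    by apply/eqP => v0; case: hw => _ + _; rewrite ew u0 v0 !scale0r addr0 eqxx.
  have hq' : M q w0 by rewrite ew u0 scale0r add0r; apply: (M_scale1 HF HF').
  have [k ek] := INJ HF HF' WL hp hq hc hi sw (span2_r p q) hw hq'.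
  have [k0 _] := hpq k (k * a - 1)
    ltac:(by rewrite scalerBl scale1r addrA -scalerA -scalerDr -ek subrr).
  by case: hq => + _ _; rewrite ek k0 scale0r eqxx.
exists (u^-1 * v).
have := M_scale1 HF HF' hw (invf_neq0 nu).
by rewrite ew scalerDr (scaleKf HF') // scalerA.
Qed.

Lemma COEF_uniq w p0 q0 (b b' : F') : ind2 p0 q0 -> M w (p0 + b *: q0) ->
  M w (p0 + b' *: q0) -> b = b'.
Proof.
move=> hi h1 h2; have [k [_ ek]] := M_uniq HF HF' h1 h2.
move: ek; rewrite scalerDr scalerA -{1}(scale1r p0) => /(ind2_coef hi) [<- ->].
by rewrite mul1r.
Qed.

Hypothesis HS : forall s : F -> F', s 1 = 1 ->
  (forall a b, s (a + b) = s a + s b) -> (forall a b, s (a * b) = s a * s b) ->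
  forall y, exists x, s x = y.

Lemma S_norm x y z x0 y0 z0 : M x x0 -> M y y0 -> M z z0 -> ind3 x0 y0 z0 ->
  M (x + y) (x0 + y0) -> M (x + z) (x0 + z0) ->
  forall be, exists a, M (x + a *: y) (x0 + be *: y0).
Proof.
move=> hx hy hz hi hxy hxz.
have hi2 := ind3_perm23 hi.
have hi3 := ind3_perm_cyc hi.
have [s1 H1] := fchoice (COEF hx hy hz hi).
have [s2 H2] := fchoice (COEF hx hz hy hi2).
have [s3 H3] := fchoice (COEF hy hz hx hi3).
have hxyz := notspan_img HF HF' WL hx hy hz hi.
have u1 : forall a b, M (x + a *: y) (x0 + b *: y0) -> s1 a = b.
  by move=> a b h; apply: COEF_uniq (ind3_ind2 hi) (H1 a) h.
have u2 : forall a b, M (x + a *: z) (x0 + b *: z0) -> s2 a = b.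
  by move=> a b h; apply: COEF_uniq (ind3_ind2 hi2) (H2 a) h.
have u3 : forall a b, M (y + a *: z) (y0 + b *: z0) -> s3 a = b.
  by move=> a b h; apply: COEF_uniq (ind3_ind2 hi3) (H3 a) h.
have s11 : s1 1 = 1 by apply: u1; rewrite !scale1r.
have s21 : s2 1 = 1 by apply: u2; rewrite !scale1r.
have s10 : s1 0 = 0 by apply: u1; rewrite !scale0r !addr0.
have STAR : forall a b, M (x + a *: y + b *: z) (x0 + s1 a *: y0 + s2 b *: z0).
  move=> a b.
  have nw := ind3_neq0 a b hxyz.
  have hp := H1 a; have hq := H2 b.
  have ip : ind2 (x0 + s1 a *: y0) z0 := ind3_I1 (s := s1 a) hi.
  have iq : ind2 (x0 + s2 b *: z0) y0 := ind3_I1 (s := s2 b) hi2.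
  have sw1 : span2 (x + a *: y) z (x + a *: y + b *: z) by exists 1, b; rewrite scale1r.
  have sw2 : span2 (x + b *: z) y (x + a *: y + b *: z).
    by exists 1, a; rewrite scale1r addrAC.
  have [w0 hw] := FA HF HF' WL hp hz ip sw1 nw.
  have [u [v e1]] := LINE HF HF' WL hp hz ip sw1 hw.
  have [u' [v' e2]] := LINE HF HF' WL hq hy iq sw2 hw.
  have e3 : u *: x0 + (u * s1 a) *: y0 + v *: z0 = u' *: x0 + v' *: y0 + (u' * s2 b) *: z0.
    have E1 : u *: x0 + (u * s1 a) *: y0 + v *: z0 = w0 by rewrite e1 scalerDr scalerA.
    have E2 : u' *: x0 + v' *: y0 + (u' * s2 b) *: z0 = w0.
      by rewrite e2 scalerDr scalerA addrAC.
    by rewrite E1 E2.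
  have [<- _ ev] := ind3_coef hi e3.
  have ew : w0 = u *: (x0 + s1 a *: y0 + s2 b *: z0).
    by rewrite e1 ev !scalerDr !scalerA.
  have nu : u != 0.
    by apply/eqP => u0; case: hw => _ + _; rewrite ew u0 scale0r eqxx.
  have := M_scale1 HF HF' hw (invf_neq0 nu).
  by rewrite ew (scaleKf HF').
have REL1 : forall a b, a != 0 -> s2 b = s1 a * s3 (a^-1 * b).
  move=> a b na.
  have hq := H3 (a^-1 * b).
  have ix : ind2 x0 (y0 + s3 (a^-1 * b) *: z0) := ind3_I2 (s := s3 (a^-1 * b)) hi.
  have sw : span2 x (y + (a^-1 * b) *: z) (x + a *: y + b *: z).
    exists 1, a; rewrite scale1r scalerDr scalerA mulrA (mulfV' HF) // mul1r.
    by rewrite addrA.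
  have [u [v e]] := LINE HF HF' WL hx hq ix sw (STAR a b).
  have E : 1 *: x0 + s1 a *: y0 + s2 b *: z0 =
           u *: x0 + v *: y0 + (v * s3 (a^-1 * b)) *: z0.
    by rewrite scale1r e scalerDr scalerA addrA.
  by have [_ -> ->] := ind3_coef hi E.
have REL2 : forall a b, exists v, s1 a = s1 (a + b) + v /\ s2 b = v * s3 (-1).
  move=> a b.
  have hp := H1 (a + b); have hq := H3 (-1).
  have ipq : ind2 (x0 + s1 (a + b) *: y0) (y0 + s3 (-1) *: z0) := ind3_I3 hi.
  have sw : span2 (x + (a + b) *: y) (y + (-1) *: z) (x + a *: y + b *: z).
    exists 1, (- b); rewrite scale1r scalerDr scalerA mulrN1 opprK scalerDl scaleNr.
    by rewrite !addrA addrK.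
  have [u [v e]] := LINE HF HF' WL hp hq ipq sw (STAR a b).
  have E : 1 *: x0 + s1 a *: y0 + s2 b *: z0 =
           u *: x0 + (u * s1 (a + b) + v) *: y0 + (v * s3 (-1)) *: z0.
    by rewrite scale1r e !scalerDr !scalerA scalerDl !addrA.
  have [<- -> ->] := ind3_coef hi E.
  by exists v; rewrite mul1r.
have s20 : s2 0 = 0 by apply: u2; rewrite !scale0r !addr0.
have s23 : forall b, s2 b = s3 b.
  by move=> b; rewrite (REL1 1 b (oner_neq0 F)) invr1 !mul1r s11 mul1r.
have s31 : s3 1 = 1 by rewrite -s23.
have s12 : forall a, s1 a = s2 a.
  move=> a; case: (eqVneq a 0) => [->|na]; first by rewrite s10 s20.
  by rewrite (REL1 a a na) (mulVf' HF) // s31 mulr1.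
have sN1 : s3 (-1) = -1.
  have [v [e1 e2]] := REL2 0 1.
  move: e1; rewrite add0r s10 s11 => e1.
  have ev : v = -1 by apply: (addrI 1); rewrite -e1 subrr.
  move: e2; rewrite s21 ev mulN1r => e2.
  by rewrite -[s3 (-1)]opprK -e2.
have sadd : forall a b, s1 (a + b) = s1 a + s1 b.
  move=> a b; have [v [e1 e2]] := REL2 a b.
  move: e2; rewrite sN1 mulrN1 -s12 => ev.
  by rewrite e1 ev addrK.
have smul : forall a b, s1 (a * b) = s1 a * s1 b.
  move=> a b; case: (eqVneq a 0) => [->|na]; first by rewrite mul0r s10 mul0r.
  by rewrite s12 (REL1 a (a * b) na) mulrA (mulVf' HF) // mul1r -s23 -s12.
move=> be; have [a ea] := HS s11 sadd smul be.
by exists a; rewrite -ea.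
Qed.


Lemma NORM x y z x0 y0 z0 : M x x0 -> M y y0 -> M z z0 -> ind3 x0 y0 z0 ->
  exists k, k != 0 /\ M (x + y) (x0 + k *: y0).
Proof.
move=> hx hy hz hi.
have [k hk] := COEF hx hy hz hi 1; rewrite scale1r in hk.
exists k; split=> //; apply/eqP => k0; move: hk; rewrite k0 scale0r addr0 => hk.
have hxy := ind2_img HF HF' hx hy (ind3_ind2 hi).
have sp : span2 x y (x + y) by exists 1, 1; rewrite !scale1r.
have [l el] := INJ HF HF' WL hx hy hz hi sp (span2_l x y) hk hx.
have [h1 h2] := hxy (l - 1) l ltac:(by rewrite scalerBl scale1r addrAC -scalerDr -el subrr).
by move/eqP: h1; rewrite h2 sub0r oppr_eq0 oner_eq0.
Qed.

Lemma ind3_scale (x0 y0 z0 : V') (b c : F') : ind3 x0 y0 z0 -> b != 0 -> c != 0 ->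
  ind3 x0 (b *: y0) (c *: z0).
Proof.
move=> hi nb nc a1 b1 c1; rewrite !scalerA => e.
have [-> h2 h3] := hi _ _ _ e.
split=> //.
- by case: (mul_eq0' HF' h2) => // /eqP; rewrite (negPf nb).
- by case: (mul_eq0' HF' h3) => // /eqP; rewrite (negPf nc).
Qed.

Lemma LemS x y z x0 y0 z0 w0 : M x x0 -> M y y0 -> M z z0 -> ind3 x0 y0 z0 ->
  span2 x0 y0 w0 -> w0 != 0 -> exists w, span2 x y w /\ M w w0.
Proof.
move=> hx hy hz hi [m [n ew]] nw.
case: (eqVneq m 0) => [m0|nm].
  have nn : n != 0 by apply/eqP => n0; move: nw; rewrite ew m0 n0 !scale0r addr0 eqxx.
  exists y; split; first exact: span2_r.
  by rewrite ew m0 scale0r add0r; apply: (M_scale1 HF HF').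
have [b [nb hb]] := NORM hx hy hz hi.
have [c [nc hc]] := NORM hx hz hy (ind3_perm23 hi).
have hy1 := M_scale1 HF HF' hy nb.
have hz1 := M_scale1 HF HF' hz nc.
have hi1 := ind3_scale hi nb nc.
have [a ha] := S_norm hx hy1 hz1 hi1 hb hc (m^-1 * n * b^-1).
exists (x + a *: y); split; first by exists 1, a; rewrite scale1r.
have := M_scale1 HF HF' ha nm.
rewrite scalerDr !scalerA -!mulrA (mulVf' HF') // mulr1 mulrA (mulfV' HF') // mul1r.
by rewrite ew.
Qed.

End SIG.

Section FIN.
Variables F F' : unitRingType.
Hypothesis HF : forall x : F, x != 0 -> x \is a GRing.unit.
Hypothesis HF' : forall x : F', x != 0 -> x \is a GRing.unit.
Variables (V : lmodType F) (V' : lmodType F').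
Variable phi : projmap V V'.
Hypothesis WL : weak_linear phi.
Hypothesis HS : forall s : F -> F', s 1 = 1 ->
  (forall a b, s (a + b) = s a + s b) -> (forall a b, s (a * b) = s a * s b) ->
  forall y, exists x, s x = y.

Notation M := (M phi).
Notation U := (U phi).

Definition tri := exists a b c a0 b0 c0, [/\ M a a0, M b b0, M c c0 & ind3 a0 b0 c0].

Lemma tri_of : contains_triangle (im phi) -> tri.
Proof.
move=> [A [B [C [[XA [_ eA]] [XB [_ eB]] [XC [_ eC]] hAB hC]]]].
have [a0 [na0 ma0]] := point_gen A.
have [b0 [nb0 mb0]] := point_gen B.
have [c0 [nc0 mc0]] := point_gen C.
have [a [na ma]] := point_gen XA.
have [b [nb mb]] := point_gen XB.
have [c [nc mc]] := point_gen XC.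
exists a, b, c, a0, b0, c0; split.
- by split=> //; exists XA, A.
- by split=> //; exists XB, B.
- by split=> //; exists XC, C.
apply: (ind3_of HF'); first exact: (pt_neq_ind2 HF' ma0 mb0).
by move=> hs; apply: hC; apply: (pjoin_span HF' ma0 mb0 mc0).
Qed.

Hypothesis T : tri.

Lemma THIRD x0 y0 : ind2 x0 y0 -> exists z z0, M z z0 /\ ind3 x0 y0 z0.
Proof.
move=> h; have [a [b [c [a0 [b0 [c0 [ha hb hc hi]]]]]]] := T.
case: (three_in_two HF' x0 y0 hi) => [hn|[hn|hn]].
- by exists a, a0; split=> //; apply: (ind3_of HF').
- by exists b, b0; split=> //; apply: (ind3_of HF').
- by exists c, c0; split=> //; apply: (ind3_of HF').
Qed.

Lemma SECOND x0 : x0 != 0 -> exists c c0, M c c0 /\ ind2 x0 c0.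
Proof.
move=> h; have [a [b [c [a0 [b0 [c0 [ha hb hc hi]]]]]]] := T.
case: (classic (span1 x0 a0)) => h1.
  case: (classic (span1 x0 b0)) => h2.
    by exfalso; apply: (span1_ind2 HF' h1 h2 (Mnz' ha) (ind3_ind2 hi)).
  by exists b, b0; split=> //; apply: (ind2_notspan HF').
by exists a, a0; split=> //; apply: (ind2_notspan HF').
Qed.

Lemma span2_same (a w : V') : span2 a a w -> span1 a w.
Proof. by move=> [k [l ->]]; exists (k + l); rewrite scalerDl. Qed.

Lemma L2v x y x0 : M x x0 -> M y x0 -> ind2 x y -> exists r, [/\ span2 x y r, r != 0 & U r].
Proof.
move=> hx hy hxy.
have [c [c0 [hc ic]]] := SECOND (Mnz' hx).
have [d [d0 [hd id]]] := THIRD ic.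
have sw0 : span2 x0 c0 (x0 + c0) by exists 1, 1; rewrite !scale1r.
have nw0 : x0 + c0 != 0.
  apply/eqP => e; have [h _] := ic 1 1 ltac:(by rewrite !scale1r).
  by move/eqP: h; rewrite oner_eq0.
have [p [[al [be ep]] hp]] := LemS HF HF' WL HS hx hc hd id sw0 nw0.
have [q [[ga [de eq]] hq]] := LemS HF HF' WL HS hy hc hd id sw0 nw0.
have bad : forall k, x0 + c0 = k *: x0 -> False.
  move=> k e; have [_ h] := ind2_coef (a := 1) (b := 1) (c := k) (d := 0) ic
    ltac:(by rewrite scale0r addr0 !scale1r).
  by move/eqP: h; rewrite oner_eq0.
have nbe : be != 0.
  apply/eqP => b0; move: hp; rewrite ep b0 scale0r addr0 => hp.
  by have [k [_ ek]] := M_proj HF HF' hx hp; apply: (bad k).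
have nde : de != 0.
  apply/eqP => d0'; move: hq; rewrite eq d0' scale0r addr0 => hq.
  by have [k [_ ek]] := M_proj HF HF' hy hq; apply: (bad k).
have nal : al != 0.
  apply/eqP => a0; move: hp; rewrite ep a0 scale0r add0r => hp.
  have [k [_ ek]] := M_proj HF HF' hc hp.
  have [h _] := ind2_coef (a := 1) (b := 1) (c := 0) (d := k) ic
    ltac:(by rewrite scale0r add0r !scale1r).
  by move/eqP: h; rewrite oner_eq0.
have hxyc : ind3 x y c.
  apply: (ind3_of HF) => // hs.
  have := WL_MM HF HF' WL hxy hx hy hs hc.
  move=> /span2_same [k ek]; exact: ind2_prop ic ek.
set r := be^-1 *: p - de^-1 *: q.
have er : r = (be^-1 * al) *: x - (de^-1 * ga) *: y.
  rewrite /r ep eq !scalerDr !scalerA !(mulVf' HF) // !scale1r.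
  by rewrite opprD addrA addrAC addrK.
have sr : span2 x y r by rewrite er; exists (be^-1 * al), (- (de^-1 * ga)); rewrite scaleNr.
have nr : r != 0.
  apply/eqP => e; have [h _] := hxy (be^-1 * al) (- (de^-1 * ga))
    ltac:(by rewrite scaleNr -er e).
  by move/eqP: h; rewrite (negPf (mul_neq0' HF (invf_neq0 nbe) nal)).
exists r; split=> //.
case: (M_cases phi nr) => // -[r0 hr]; exfalso.
have [k ek] := span2_same (WL_MM HF HF' WL hxy hx hy sr hr).
have hpq : ind2 p q.
  move=> a b e.
  have e' : (a * al) *: x + (b * ga) *: y + (a * be + b * de) *: c = 0.
    rewrite -e ep eq !scalerDr !scalerA scalerDl.
    by rewrite !addrA; congr (_ + _); rewrite addrAC.
  have [h1 h2 h3] := hxyc _ _ _ e'.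
  have a0 : a = 0 by case: (mul_eq0' HF h1) => // /eqP; rewrite (negPf nal).
  move: h3; rewrite a0 mul0r add0r => h3.
  by split=> //; case: (mul_eq0' HF h3) => // /eqP; rewrite (negPf nde).
have spq : span2 p q r by exists be^-1, (- de^-1); rewrite scaleNr.
have [l el] := span2_same (WL_MM HF HF' WL hpq hp hq spq hr).
have [h1 h2] := ind2_coef (a := k) (b := 0) (c := l) (d := l) ic
  ltac:(by rewrite scale0r addr0 -ek el scalerDr).
by case: hr => _ + _; rewrite el -h2 scale0r eqxx.
Qed.

End FIN.

Section MkRM.
Variables (R S : nzRingType) (f : R -> S).
Hypotheses (f1 : f 1 = 1) (fD : forall a b, f (a + b) = f a + f b)
  (fM : forall a b, f (a * b) = f a * f b).
Definition mkf := f.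
Lemma mkf_zmod : zmod_morphism mkf.
Proof.
move=> a b; rewrite /mkf.
have f0 : f 0 = 0 by apply: (addrI (f 0)); rewrite -fD !addr0.
have fN : forall c, f (- c) = - f c.
  by move=> c; apply: (addrI (f c)); rewrite -fD !subrr.
by rewrite fD fN.
Qed.
HB.instance Definition _ := GRing.isZmodMorphism.Build R S mkf mkf_zmod.
Lemma mkf_mon : monoid_morphism mkf.
Proof. by split; [exact: f1 | move=> a b; exact: fM]. Qed.
HB.instance Definition _ := GRing.isMonoidMorphism.Build R S mkf mkf_mon.
Definition mkrm : {rmorphism R -> S} := mkf.
Lemma mkrmE x : mkrm x = f x. Proof. by []. Qed.
End MkRM.

Section IMG.
Variables F F' : unitRingType.
Hypothesis HF' : forall x : F', x != 0 -> x \is a GRing.unit.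
Variables (V : lmodType F) (V' : lmodType F').
Variable phi : projmap V V'.

Lemma img_span (X Y : point V) (a b v : V') :
  (forall Z u, phi X = Some Z -> pmem Z u -> span2 a b u) ->
  (forall Z u, phi Y = Some Z -> pmem Z u -> span2 a b u) ->
  vspan (fun u => exists Z, (pimage phi (pset1 X) Z \/ pimage phi (pset1 Y) Z) /\ pmem Z u) v ->
  span2 a b v.
Proof.
move=> h1 h2; apply: vspan_sub => u [Z [[[X1 [-> e]]|[X1 [-> e]]] hu]].
- exact: h1 e hu.
- exact: h2 e hu.
Qed.

Lemma pmem_span (P : point V') p a b u : pmem P p -> p != 0 -> span2 a b p ->
  pmem P u -> span2 a b u.
Proof.
move=> hp np hs hu; have [k ->] := proj1 (point_char HF' hp np u) hu.
exact: span2_scale.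
Qed.
End IMG.

Theorem corollary3 (K K' : unitRingType)
  (HK : skew_field K) (HK' : skew_field K')
  (V : lmodType K^c) (V' : lmodType K'^c)
  (phi : projmap V V') :
  weak_linear phi ->
  contains_triangle (im phi) ->
  (forall f : {rmorphism K -> K'}, injective f ->
     forall y : K', exists x : K, f x = y) ->
  linear_map phi.
Proof.
move=> WL TR HS0.
have HF : forall x : K^c, x != 0 -> x \is a GRing.unit := HK.
have HF' : forall x : K'^c, x != 0 -> x \is a GRing.unit := HK'.
have HS : forall s : K^c -> K'^c, s 1 = 1 ->
  (forall a b, s (a + b) = s a + s b) -> (forall a b, s (a * b) = s a * s b) ->
  forall y, exists x, s x = y.
  move=> s s1 sD sM.
  have sM' : forall a b : K, s (@GRing.mul K a b) = @GRing.mul K' (s a) (s b).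
    move=> a b; exact (sM b a).
  pose g := mkrm (R := K) (S := K') s1 sD sM'.
  apply: (HS0 g) => a b e.
  apply/eqP; rewrite -subr_eq0; apply/negPn/negP => nab.
  have : g ((a - b) * (a - b)^-1) = 0 by rewrite rmorphM rmorphB e subrr mul0r.
  by rewrite mulrV ?HK // rmorph1 => /eqP; rewrite oner_eq0.
have T := tri_of HF' TR.
split.
- move=> X Y hXY Z; split; first exact: (WL X Y hXY Z).
  move=> hj.
  have [x [nx mx]] := point_gen X; have [y [ny my]] := point_gen Y.
  have [z [nz mz]] := point_gen Z.
  have hxy : ind2 x y := pt_neq_ind2 HF mx my nx ny hXY.
  have wX : pjoin (pset1 X) (pset1 Y) X := pjoin_span HF mx my mx nx (span2_l x y).
  have wY : pjoin (pset1 X) (pset1 Y) Y := pjoin_span HF mx my my ny (span2_r x y).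
  have hz := hj z mz.
  case eX : (phi X) => [X'|]; case eY : (phi Y) => [Y'|].
  + have [x' [nx' mx']] := point_gen X'; have [y' [ny' my']] := point_gen Y'.
    have hx : M phi x x' by split=> //; exists X, X'.
    have hy : M phi y y' by split=> //; exists Y, Y'.
    have sz : span2 x' y' z.
      apply: (img_span (X := X) (Y := Y)) hz => Z0 u.
      * by rewrite eX => -[<-]; move=> hu; exact: (pmem_span HF' mx' nx' (span2_l x' y') hu).
      * by rewrite eY => -[<-]; move=> hu; exact: (pmem_span HF' my' ny' (span2_r x' y') hu).
    case: (classic (ind2 x' y')) => hi.
    * have [w0 [z0 [hw0 hi3]]] := THIRD HF' T hi.
      have [w [sw hw]] := LemS HF HF' WL HS hx hy hw0 hi3 sz nz.
      have nw : w != 0 by case: hw.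
      exists (pt nw); split; first by have := pjoin_span HF mx my (pt_mem nw) nw sw.
      have [Y1 [e1 m1]] := M_pt HF hw (pt_mem nw).
      by rewrite e1 (point_eq HF' m1 mz nz).
    * have [k [_ ek]] := not_ind2 HF' nx' ny' hi.
      move: sz => [a [b ez]].
      have mzX : pmem X' z.
        by rewrite ez ek scalerA -scalerDl; apply: pmem_scale.
      by exists X; split=> //; rewrite eX (point_eq HF' mzX mz nz).
  + have [x' [nx' mx']] := point_gen X'.
    have sz : span2 x' x' z.
      apply: (img_span (X := X) (Y := Y)) hz => Z0 u.
      * by rewrite eX => -[<-]; move=> hu; exact: (pmem_span HF' mx' nx' (span2_l x' x') hu).
      * by rewrite eY.
    move: sz => [a [b ez]].
    have mzX : pmem X' z by rewrite ez -scalerDl; apply: pmem_scale.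
    by exists X; split=> //; rewrite eX (point_eq HF' mzX mz nz).
  + have [y' [ny' my']] := point_gen Y'.
    have sz : span2 y' y' z.
      apply: (img_span (X := X) (Y := Y)) hz => Z0 u.
      * by rewrite eX.
      * by rewrite eY => -[<-]; move=> hu; exact: (pmem_span HF' my' ny' (span2_l y' y') hu).
    move: sz => [a [b ez]].
    have mzY : pmem Y' z by rewrite ez -scalerDl; apply: pmem_scale.
    by exists Y; split=> //; rewrite eY (point_eq HF' mzY mz nz).
  + have sz : span2 (0 : V') 0 z.
      apply: (img_span (X := X) (Y := Y)) hz => Z0 u.
      * by rewrite eX.
      * by rewrite eY.
    by move: nz; case: sz => a [b ->]; rewrite !scaler0 addr0 eqxx.
- move=> X Y Z' hXY eX eY.
  have [x [nx mx]] := point_gen X; have [y [ny my]] := point_gen Y.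
  have [z [nz mz]] := point_gen Z'.
  have hxy : ind2 x y := pt_neq_ind2 HF mx my nx ny hXY.
  have hx : M phi x z by split=> //; exists X, Z'.
  have hy : M phi y z by split=> //; exists Y, Z'.
  have [r [sr nr hU]] := L2v HF HF' WL HS T hx hy hxy.
  exists (pt nr); split; first by have := pjoin_span HF mx my (pt_mem nr) nr sr.
  exact (U_pt HF hU (pt_mem nr)).
Qed.
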